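(* If $X$ is an infinite Tychonoff space, then $\mathcal{F}(X)$ is not pseudocompact.
   Context: $\mathcal{F}(X)$ is the set of nonempty finite subsets of $X$ with the Vietoris topology (generated by $U^+=\{A: A\subset U\}$ and $U^-=\{A: A\cap U\neq\emptyset\}$ for $U$ open in $X$). A Tychonoff space is pseudocompact if every locally finite collection of nonempty open sets is finite. *)

(* Defs.v *)
From HB Require Import structures.
From mathcomp Require Import all_boot all_order all_algebra.
From mathcomp Require Import all_classical all_reals all_analysis.
Set Implicit Arguments. Unset Strict Implicit. Unset Printing Implicit Defensive.
Import Order.TTheory GRing.Theory Num.Theory.
Import numFieldNormedType.Exports.
Local Open Scope classical_set_scope.
Local Open Scope ring_scope.

Definition tychonoff_space (R : realType) (X : topologicalType) : Prop :=
  accessible_space X /\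
  forall (x : X) (B : set X), closed B -> ~ B x ->
    exists f : X -> R, [/\ continuous f, f x = 0 & forall y, B y -> f y = 1].

Definition finsubsets (X : Type) : Type :=
  {A : set X | finite_set A /\ A !=set0}.

HB.instance Definition _ (X : Type) := gen_eqMixin (finsubsets X).
HB.instance Definition _ (X : Type) := gen_choiceMixin (finsubsets X).

(** Subbase of the Vietoris topology: for U open in X,
    (true, U)  indexes U^+ = {A | A ⊆ U},
    (false, U) indexes U^- = {A | A ∩ U ≠ ∅}. *)
Definition vietoris_index (X : topologicalType) : set (bool * set X)%type :=
  [set i | open i.2].

Definition vietoris_subbase (X : topologicalType) (i : bool * set X)
  : set (finsubsets X) :=
  if i.1 then [set A | proj1_sig A `<=` i.2]
  else [set A | proj1_sig A `&` i.2 !=set0].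

Definition vietorisF (X : topologicalType) : Type := finsubsets X.
HB.instance Definition _ (X : topologicalType) := Choice.on (vietorisF X).
HB.instance Definition _ (X : topologicalType) :=
  isSubBaseTopological.Build (vietorisF X)
    (@vietoris_index X) (@vietoris_subbase X).

Definition locally_finite_collection (T : topologicalType) (C : set (set T)) :=
  forall x : T, exists2 N, nbhs x N & finite_set [set U | C U /\ U `&` N !=set0].

Definition pseudocompact (T : topologicalType) : Prop :=
  forall C : set (set T),
    (forall U, C U -> open U /\ U !=set0) ->
    locally_finite_collection C -> finite_set C.

(* Main.v *)
Require Import Defs.
From HB Require Import structures.
From mathcomp Require Import all_boot all_order all_algebra.
From mathcomp Require Import all_classical all_reals all_analysis.
From mathcomp Require Import lra.
Local Open Scope classical_set_scope.

Set Implicit Arguments. Unset Strict Implicit.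
Import Order.TTheory GRing.Theory Num.Theory.
Import numFieldNormedType.Exports.

Definition good (X : topologicalType) (p : set X * set X) :=
  [/\ open p.1, infinite_set p.1, closed p.2 & p.1 `<=` p.2].

Definition stepP (X : topologicalType) (p : set X * set X)
  (q : (set X * set X) * (set X * set X)) :=
  [/\ good q.2, [/\ open q.1.1, q.1.1 !=set0, q.1.1 `<=` q.1.2,
     closed q.1.2 & q.1.2 `<=` p.2], q.1.2 `&` q.2.2 = set0 & q.2.2 `<=` p.2].

Lemma gen_step (R : realType) (X : topologicalType) (g : X -> R)
  (cg : continuous g) (s t : R) (lst : (s < t)%R) (Y L : set X) :
  good (Y, L) -> (exists2 p, Y p & (g p < s)%R) ->
  infinite_set (Y `&` [set x | (t < g x)%R]) ->
  exists q, stepP (Y, L) q.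
Proof.
move=> [/= oY iY cL YL] [p Yp gp] inf.
exists ((Y `&` g @^-1` [set x | (x < s)%R], L `&` g @^-1` [set x | (x <= s)%R]),
        (Y `&` g @^-1` [set x | (t < x)%R], L `&` g @^-1` [set x | (t <= x)%R])).
split => /=.
- split => /=.
  + apply: openI => //; exact: ((continuousP g).1 cg _ (@open_gt _ t)).
  + exact: inf.
  + apply: closedI => //; exact: ((continuous_closedP g).1 cg _ (@closed_ge _ t)).
  + by move=> x [/YL Lx /= h]; split => //=; apply: ltW.
- split.
  + apply: openI => //; exact: ((continuousP g).1 cg _ (@open_lt _ s)).
  + by exists p.
  + by move=> x [/YL Lx /= h]; split => //=; apply: ltW.
  + apply: closedI => //; exact: ((continuous_closedP g).1 cg _ (@closed_le _ s)).
  + by move=> x [].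
- apply/seteqP; split => x // [[_ /= h1] [_ /= h2]]. exfalso. lra.
- by move=> x [].
Qed.

Lemma step (R : realType) (X : topologicalType) :
  tychonoff_space R X -> forall p : set X * set X, good p -> exists q, stepP p q.
Proof.
move=> [acc tych] [Y L] gd; have [/= oY iY cL YL] := gd.
have [a Ya] : Y !=set0.
  apply/set0P/negP => /eqP Y0; apply: iY; rewrite Y0; exact: finite_set0.
have [b [Yb nba]] : (Y `\ a) !=set0.
  apply/set0P/negP => /eqP Y0.
  by have := infinite_setD iY (finite_set1 a); rewrite Y0; apply; exact: finite_set0.
have [f [cf fa fb]] := tych a [set b] (@accessible_closed_set1 _ acc b)
   (fun h => nba (esym h)).
have {}fb := fb b erefl.
have [fin1|inf1] := pselect (finite_set (Y `&` [set x | (1/2 <= f x)%R])).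
- have inf2 : infinite_set (Y `&` [set x | (f x < 1/2)%R]).
    move=> fin2; apply: iY.
    apply: (@sub_finite_set _ _ ((Y `&` [set x | (f x < 1/2)%R]) `|` (Y `&` [set x | (1/2 <= f x)%R]))).
      move=> x Yx; have [h|h] := ltP (f x) (1/2)%R; [left|right]; by split.
    by rewrite finite_setU; split.
  apply: (@gen_step R X (fun x => - f x)%R _ (-(3/4))%R (-(2/3))%R).
  + move=> x; apply: continuousN; exact: cf.
  + lra.
  + exact: gd.
  + by exists b => //; rewrite fb; lra.
  + apply: contra_not inf2; apply: sub_finite_set => x [Yx /= h]; split => //=; lra.
- apply: (@gen_step R X f cf (1/4)%R (1/3)%R).
  + lra.
  + exact: gd.
  + by exists a => //; rewrite fa; lra.
  + apply: contra_not inf1; apply: sub_finite_set => x [Yx /= h]; split => //=; lra.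
Qed.

Lemma vopen (X : topologicalType) (b : bool) (U : set X) : open U ->
  @open (vietorisF X) (vietoris_subbase (b, U)).
Proof.
move=> oU.
exists [set vietoris_subbase (b, U)].
  move=> S ->. apply: finI_from1. exact: oU.
by rewrite bigcup_set1.
Qed.

Theorem lemma4p6 (R : realType) (X : topologicalType) :
  tychonoff_space R X -> infinite_set [set: X] -> ~ pseudocompact (vietorisF X).
Proof.
move=> ty infX pc.
have H : forall p : set X * set X, exists q, good p -> stepP p q.
  move=> p; have [gp|ngp] := pselect (good p).
  - have [q hq] := step ty gp; exists q => _; exact hq.
  - by exists ((setT,setT),(setT,setT)) => /ngp [].
pose F p := projT1 (cid (H p)).
have HF : forall p, good p -> stepP p (F p) := fun p => projT2 (cid (H p)).
pose st := fix st (n : nat) : set X * set X :=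
  match n with 0%N => (setT, setT) | m.+1 => (F (st m)).2 end.
have gst : forall n, good (st n).
  elim => [|n IH]; first by split => //=; first [exact: openT | exact: closedT | exact: infX].
  by have [] := HF _ IH.
pose U n := (F (st n)).1.1. pose K n := (F (st n)).1.2. pose Lf n := (st n).2.
have hU n : [/\ open (U n), U n !=set0, U n `<=` K n, closed (K n) & K n `<=` Lf n].
  by have [_ h _ _] := HF _ (gst n).
have hKL n : K n `&` Lf n.+1 = set0 by have [_ _ h _] := HF _ (gst n).
have hLL n : Lf n.+1 `<=` Lf n by have [_ _ _ h] := HF _ (gst n).
have hLm : forall n m, (n <= m)%N -> Lf m `<=` Lf n.
  move=> n m /subnK <-; elim: (m - n)%N => [|k IH]; first by rewrite add0n.
  by rewrite addSn; apply: subset_trans (hLL _) IH.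
have Kdisj : forall i j, i <> j -> forall x, K i x -> K j x -> False.
  suff hl : forall i j, (i < j)%N -> forall x, K i x -> K j x -> False.
    move=> i j /eqP; rewrite neq_ltn => /orP [h|h] x a b.
      exact: hl h x a b.
    exact: hl h x b a.
  move=> i j ij x Ki Kj.
  have Lx : Lf i.+1 x by apply: (hLm _ _ ij); have [_ _ _ _ h] := hU j; exact: h.
  have : (K i `&` Lf i.+1) x by split.
  by rewrite hKL.
have xex n : exists y, U n y by have [_ [y Uy] _ _ _] := hU n; exists y.
pose x n := projT1 (cid (xex n)).
have xU n : U n (x n) := projT2 (cid (xex n)).
pose W n : set (vietorisF X) :=
  [set A | forall i, (i <= n)%N -> proj1_sig A `&` U i !=set0].
have Wopen n : open (W n).
  elim: n => [|n IH].
    have -> : W 0%N = vietoris_subbase (false, U 0%N).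
      apply/seteqP; split => A /=.
        by move=> /(_ 0%N (leqnn 0)).
      by move=> h i; rewrite leqn0 => /eqP ->.
    by apply: vopen; have [] := hU 0%N.
  have -> : W n.+1 = W n `&` vietoris_subbase (false, U n.+1).
    apply/seteqP; split => A /=.
      move=> h; split; [move=> i lin; apply: h; exact: leqW | apply: h; exact: leqnn].
    move=> [h1 h2] i; rewrite leq_eqVlt => /orP [/eqP ->|]; first exact: h2.
    rewrite ltnS; exact: h1.
  by apply: openI => //; apply: vopen; have [] := hU n.+1.
have Anex n : finite_set (x @` `I_n.+1) /\ (x @` `I_n.+1) !=set0.
  split; first exact: (finite_image _ (finite_II _)).
  by exists (x 0%N); exists 0%N.
pose An n : vietorisF X := exist _ (x @` `I_n.+1) (Anex n).
have WAn n : W n (An n).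
  move=> i lin; exists (x i); split; last exact: xU.
  by exists i => //=; rewrite ltnS.
have nWAn n m : (n < m)%N -> ~ W m (An n).
  move=> nm h; have [y [[i ilt <-] Uy]] := h m (leqnn m).
  apply: (Kdisj i m _ (x i)).
  - move=> im; move: ilt nm; rewrite im /= ltnS => a b.
    by have := leq_ltn_trans a b; rewrite ltnn.
  - by have [_ _ hh _ _] := hU i; apply: hh; exact: xU.
  - by have [_ _ hh _ _] := hU m; apply: hh.
have Winj : injective W.
  move=> n m E; apply/eqP; have [h|h|//] := ltngtP n m; exfalso.
    by apply: (nWAn n m h); rewrite -E; exact: WAn.
  by apply: (nWAn m n h); rewrite E; exact: WAn.
have fin : finite_set (range W).
apply: pc.
- by move=> V [n _ <-]; split; [exact: Wopen | exists (An n); exact: WAn].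
- move=> B.
  pose Bs := proj1_sig B. have [finB _] := proj2_sig B.
  have finI : finite_set [set i | exists2 b, Bs b & K i b].
    apply: (@sub_finite_set _ _ (\bigcup_(b in Bs) [set i | K i b])).
      by move=> i [b Bb Kb]; exists b.
    apply: bigcup_finite => // b _.
    have [[i Ki]|nK] := pselect (exists i, K i b).
      apply: (@sub_finite_set _ _ [set i]) => // j Kj /=.
      by apply: contrapT => ji; exact: (Kdisj j i ji b Kj Ki).
    apply: (@sub_finite_set _ _ set0); last exact: finite_set0.
    by move=> j Kj; apply: nK; exists j.
  have [i0 ni0] : exists i0, ~ (exists2 b, Bs b & K i0 b).
    apply: contrapT => hh; apply: infinite_nat; apply: sub_finite_set finI => i _ /=.
    by apply: contrapT => hi; apply: hh; exists i.
  exists (vietoris_subbase (true, ~` K i0)).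
    apply: open_nbhs_nbhs; split.
      by apply: vopen; apply: closed_openC; have [] := hU i0.
    by move=> b Bb /= Kb; apply: ni0; exists b.
  apply: (@sub_finite_set _ _ (W @` `I_i0)); last exact: finite_image (finite_II _).
  move=> V [[n _ <-] [A [WA NA]]]; exists n => //=.
  rewrite ltnNge; apply/negP => i0n.
  have [y [Ay Uy]] := WA i0 i0n.
  apply: (NA y Ay); have [_ _ h _ _] := hU i0; exact: h _ Uy.
apply: infinite_nat.
apply: (@sub_finite_set _ _ (W @^-1` range W)); last exact: (finite_preimage (in2W Winj) fin).
by move=> n _; exists n.
Qed.
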